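(* Let $d\ge3$, $h\ge1$. Then $G(d,h)$ has a cyclic subgroup of order $(d-1)^h$.
   Context: Let $\mathcal{T}(d,h)$ be the rooted tree in which the root $0$ has $d$ children, every vertex at distance $1,\dots,h-1$ from the root has $d-1$ children, and the vertices at distance $h$ are leaves. Let $V$ be its vertex set, $A$ its adjacency matrix, $\Delta := dI-A$, and $\Lambda\subset\mathbb{Z}^V$ the lattice spanned by the rows of $\Delta$. Then $G(d,h):=\mathbb{Z}^V/\Lambda$. *)

(* Defs.v *)
From HB Require Import structures.
From mathcomp Require Import all_boot all_order all_algebra.
Set Implicit Arguments. Unset Strict Implicit. Unset Printing Implicit Defensive.
Import GRing.Theory.
Local Open Scope ring_scope.

(* Vertices of T(d,h): words w = [a_1; ...; a_k] with 0 <= k <= h,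
   a_1 < d and a_i < d-1 for i >= 2.  The empty word is the root 0;
   the children of w are the words rcons w a. *)
Definition pre_vert (d h : nat) := {k : 'I_h.+1 & k.-tuple 'I_d}.

Definition word_ok (d h : nat) (u : pre_vert d h) : bool :=
  all (fun a : 'I_d => (a < d.-1)%N) (behead (tagged u)).

Definition vert (d h : nat) := {u : pre_vert d h | word_ok u}.

Definition word (d h : nat) (u : vert d h) : seq 'I_d := tagged (val u).

Definition child_of (d h : nat) (u v : vert d h) : bool :=
  (size (word v) == (size (word u)).+1) &&
  (word u == take (size (word u)) (word v)).

Definition adj (d h : nat) (u v : vert d h) : bool := child_of u v || child_of v u.

Definition Delta_row (d h : nat) (u : vert d h) : {ffun vert d h -> int} :=
  [ffun w => (if u == w then d%:Z else 0) - (if adj u w then 1 else 0)].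

Definition in_Lambda (d h : nat) (x : {ffun vert d h -> int}) : Prop :=
  exists c : vert d h -> int, x = \sum_(u : vert d h) Delta_row u *~ c u.

(* G(d,h) = Z^V / Lambda has a cyclic subgroup of order m (m > 0):
   some class [x] generates a subgroup of order m, i.e. m is the least
   positive k with k x in Lambda. *)
Definition G_has_cyclic_subgroup_of_order (d h m : nat) : Prop :=
  (0 < m)%N /\
  exists x : {ffun vert d h -> int},
    in_Lambda (x *+ m) /\ forall k, (0 < k < m)%N -> ~ in_Lambda (x *+ k).

(* Main.v *)
Require Import Defs.
From mathcomp Require Import all_boot all_order all_algebra.
From mathcomp Require Import zify ring lra.
Set Implicit Arguments. Unset Strict Implicit. Unset Printing Implicit Defensive.
Import GRing.Theory Num.Theory.

Definition lvl (d h : nat) (u : vert d h) : nat := size (word u).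

Lemma lvl_le d h (u : vert d h) : (lvl u <= h)%N.
Proof. by case: u => [[k t] ok]; rewrite /lvl /word /= size_tuple -ltnS. Qed.

Lemma wok d h (u : vert d h) : all (fun a : 'I_d => (a < d.-1)%N) (behead (word u)).
Proof. exact: (valP u). Qed.

Definition mkv d h (s : seq 'I_d) (Hs : (size s < h.+1)%N)
  (Hok : all (fun a : 'I_d => (a < d.-1)%N) (behead s)) : vert d h :=
  exist _ (existT (fun k : 'I_h.+1 => k.-tuple 'I_d) (Ordinal Hs) (in_tuple s)) Hok.

Lemma word_mkv d h s Hs Hok : word (@mkv d h s Hs Hok) = s.
Proof. by []. Qed.

Lemma word_inj d h : injective (@word d h).
Proof.
move=> [[k t] okt] [[k' t'] okt'] /= E.
have Ek : k = k'.
  apply: val_inj; rewrite /= -(size_tuple t) -(size_tuple t').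
  by move: E; rewrite /word /= => ->.
subst k'.
have Et : t = t' by apply: val_inj; move: E; rewrite /word.
subst t'. by apply: val_inj.
Qed.

Lemma Delta_sym d h (u w : vert d h) : Delta_row u w = Delta_row w u.
Proof. by rewrite !ffunE eq_sym /adj orbC. Qed.
Set Implicit Arguments. Unset Strict Implicit. Unset Printing Implicit Defensive.
Import GRing.Theory Num.Theory.

Lemma card_lt_ord d m : (m <= d)%N -> #|[set a : 'I_d | (a < m)%N]| = m.
Proof.
move=> le_md; rewrite -sum1_card.
rewrite (eq_bigl (fun a : 'I_d => (a < m)%N)); last by move=> a; rewrite inE.
by rewrite (big_ord_narrow (F := fun _ => 1%N) le_md) sum1_card card_ord.
Qed.

Lemma child_word d h (u w : vert d h) (a0 : 'I_d) : child_of u w ->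
  word w = rcons (word u) (nth a0 (word w) (lvl u)).
Proof.
case/andP => /eqP Hs /eqP Hu; rewrite /lvl.
by rewrite [X in rcons X _]Hu -take_nth ?Hs // -Hs take_size.
Qed.

Lemma card_children d h (u : vert d h) : (0 < d)%N ->
  #|[pred w | child_of u w]| =
    (if lvl u == h then 0 else if lvl u == 0%N then d else d.-1)%N.
Proof.
move=> d0; set a0 : 'I_d := Ordinal d0.
have [ejh|njh] := eqVneq (lvl u) h.
  apply: eq_card0 => w; rewrite inE; apply/negP => /andP [/eqP Hs _].
  by have := lvl_le w; rewrite /lvl Hs -/(lvl u) ejh ltnn.
have ltjh : (lvl u < h)%N by rewrite ltn_neqAle njh lvl_le.
set m := (if lvl u == 0%N then d else d.-1).
have le_md : (m <= d)%N by rewrite /m; case: ifP => // _; exact: leq_pred.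
rewrite -(card_lt_ord le_md).
pose f := fun w : vert d h => nth a0 (word w) (lvl u).
rewrite -(@card_in_imset _ _ f).
  congr (#|pred_of_set _|); apply/setP => a; rewrite inE; apply/imsetP/idP.
  - case=> w; rewrite inE => Hw ->.
    rewrite /m; case: eqP => [_|nj0]; first exact: ltn_ord.
    have := wok w; rewrite (child_word a0 Hw) -/(f w).
    case E: (word u) nj0 => [|x s']; first by rewrite /lvl E.
    by move=> _ /=; rewrite all_rcons => /andP [].
  - move=> Ha.
    have Hs : (size (rcons (word u) a) < h.+1)%N by rewrite size_rcons ltnS.
    have Hok : all (fun a : 'I_d => (a < d.-1)%N) (behead (rcons (word u) a)).
      move: Ha (wok u); rewrite /m /lvl.
      case: (word u) => [|x s'] //= Ha; by rewrite all_rcons Ha.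
    exists (mkv Hs Hok); last by rewrite /f word_mkv nth_rcons ltnn eqxx.
    by rewrite inE /child_of word_mkv size_rcons eqxx /= -cats1 take_size_cat.
move=> w1 w2; rewrite !inE => H1 H2 Ef; apply: word_inj.
by rewrite (child_word a0 H1) (child_word a0 H2) -/(f w1) -/(f w2) Ef.
Qed.
Set Implicit Arguments. Unset Strict Implicit. Unset Printing Implicit Defensive.
Import GRing.Theory Num.Theory.

Lemma no_parent d h (u w : vert d h) : lvl u = 0%N -> child_of w u = false.
Proof. by move=> H; apply/negP => /andP [/eqP]; rewrite -/(lvl u) H. Qed.

Lemma parent d h (u : vert d h) j : lvl u = j.+1 ->
  exists p : vert d h, lvl p = j /\ forall w, child_of w u = (w == p).
Proof.
move=> Hj.
have Hs : (size (take j (word u)) < h.+1)%N.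
  by have := lvl_le u; rewrite Hj size_take; case: ifP; lia.
have Hok : all (fun a : 'I_d => (a < d.-1)%N) (behead (take j (word u))).
  move: (wok u); case: (word u) => [|x s] //=; case: j {Hs Hj} => [|j] //=.
  by rewrite -{1}(cat_take_drop j s) all_cat => /andP [].
have Hsz : size (take j (word u)) = j by rewrite size_take /lvl -/(lvl u) Hj ltnSn.
exists (mkv Hs Hok); split; first by rewrite /lvl word_mkv.
move=> w; apply/idP/eqP; last first.
  by move=> ->; rewrite /child_of word_mkv Hsz; move: Hj; rewrite /lvl => ->; rewrite !eqxx.
move=> /andP [/eqP H1 /eqP H2].
  apply: (@word_inj d h); rewrite word_mkv H2; congr take.
  by move: H1; rewrite -/(lvl u) Hj => -[].
Qed.

Definition G (d h j : nat) : nat := (\sum_(i < (h - j).+1) (d.-1) ^ i)%N.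

Lemma G_h d h : G d h h = 1%N.
Proof. by rewrite /G subnn big_ord1. Qed.

Lemma G_S d h j : (j < h)%N -> G d h j = (1 + d.-1 * G d h j.+1)%N.
Proof.
move=> ljh; rewrite /G.
have -> : (h - j = (h - j.+1).+1)%N by lia.
rewrite big_ord_recl expn0 big_distrr /=; congr addn.
by apply: eq_bigr => i _; rewrite expnS.
Qed.

Lemma G_0 d h : (1 <= h)%N -> G d h 0 = (G d h 1 + d.-1 ^ h)%N.
Proof.
move=> h1; rewrite /G subn0.
have -> : (h - 1).+1 = h by lia.
by rewrite big_ord_recr.
Qed.
Set Implicit Arguments. Unset Strict Implicit. Unset Printing Implicit Defensive.
Import GRing.Theory Num.Theory.
Local Open Scope ring_scope.

Lemma key d h (u : vert d h) : (0 < d)%N -> (1 <= h)%N ->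
  \sum_(w : vert d h) Delta_row u w * (G d h (lvl w))%:Z =
  (if lvl u == 0%N then (d * d.-1 ^ h)%N%:Z else 0).
Proof.
move=> d0 h1.
pose g := fun w : vert d h => (G d h (lvl w))%:Z.
rewrite (eq_bigr (fun w => (if u == w then d%:Z * g w else 0) -
   ((if child_of u w then g w else 0) + (if child_of w u then g w else 0)))); last first.
  move=> w _; rewrite ffunE mulrBl /adj.
  case: (u == w); rewrite ?mul0r ?mulr0 //=; 
  case Hc1: (child_of u w); case Hc2: (child_of w u); rewrite ?mul1r ?mul0r ?addr0 ?add0r //;
  by move: Hc1 Hc2 => /andP [/eqP E1 _] /andP [/eqP E2 _]; move: E1; rewrite E2; lia.
rewrite sumrB big_split /= -!big_mkcond /=.
rewrite (big_pred1 u); last by move=> w; rewrite /= eq_sym.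
rewrite (eq_bigr (fun _ => (G d h (lvl u).+1)%:Z)); last first.
  by move=> w /andP [/eqP E _]; rewrite /g /lvl E.
rewrite sumr_const card_children //.
rewrite /g; case E: (lvl u) => [|j].
  rewrite big_pred0; last by move=> w; rewrite no_parent.
  have -> : (0 == h)%N = false by lia.
  rewrite G_0 //= addr0; nia.
have [p [Hp Hpar]] := parent E.
rewrite (big_pred1 p) //= Hp /=.
have [ejh|njh] := eqVneq j.+1 h.
  rewrite -ejh (G_S d (ltnSn j)) !G_h /= mulr0n; move: d0; clear; case: d => // d' _ /=; lia.
have ljh : (j.+1 < h)%N by have := lvl_le u; rewrite E; lia.
rewrite (G_S d (ltnW ljh)) (G_S d ljh) /=; move: d0; clear; case: d => // d' _ /=; nia.
Qed.
Set Implicit Arguments. Unset Strict Implicit. Unset Printing Implicit Defensive.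
Import GRing.Theory Num.Theory.
Local Open Scope ring_scope.

Theorem lemma8p18 (d h : nat) (hd : (3 <= d)%N) (hh : (1 <= h)%N) :
  G_has_cyclic_subgroup_of_order d h ((d - 1) ^ h)%N.
Proof.
have d0 : (0 < d)%N by lia.
have Hs0 : (size (@nil 'I_d) < h.+1)%N by [].
have Hok0 : all (fun a : 'I_d => (a < d.-1)%N) (behead (@nil 'I_d)) by [].
pose r : vert d h := mkv Hs0 Hok0.
have lvl0 : forall w : vert d h, (lvl w == 0%N) = (w == r).
  move=> w; apply/idP/eqP => [H|->] //; apply: word_inj.
  by rewrite word_mkv; apply/eqP; rewrite -size_eq0.
rewrite subn1; set N := (d.-1 ^ h)%N.
pose g := fun w : vert d h => (G d h (lvl w))%:Z.
pose x : {ffun vert d h -> int} := [ffun w => if w == r then d%:Z else 0%R].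
have keyr : forall w, (\sum_(u : vert d h) Delta_row w u * g u = if w == r then (d * N)%N%:Z else 0)%R.
  by move=> w; rewrite /g key // lvl0.
split; first by rewrite expn_gt0; lia.
exists x; split.
  exists (fun u => g u); apply/ffunP => w.
  rewrite ffunMnE sum_ffunE !ffunE.
  rewrite (eq_bigr (fun u => Delta_row w u * g u)); last first.
    by move=> u _; rewrite ffunMzE mulrzz Delta_sym.
  by rewrite keyr; case: (w == r); rewrite ?mul0rn // PoszM -mulr_natr natz.
move=> k /andP [k0 kN] [c Hc].
have := congr1 (fun f : {ffun vert d h -> int} => \sum_w f w * g w) Hc => /=.
rewrite (eq_bigr (fun w => if w == r then (d%:Z *+ k) * g r else 0)); last first.
  by move=> w _; rewrite ffunMnE ffunE; case: eqP => [->|_]; rewrite ?mul0rn ?mul0r.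
rewrite -big_mkcond big_pred1_eq.
rewrite (eq_bigr (fun w => \sum_u c u * (Delta_row u w * g w))); last first.
  by move=> w _; rewrite sum_ffunE mulr_suml; apply: eq_bigr => u _; rewrite ffunMzE mulrzz mulrA [c u * _]mulrC.
rewrite exchange_big /=.
rewrite (eq_bigr (fun u => c u * (if u == r then (d * N)%N%:Z else 0))); last first.
  by move=> u _; rewrite -mulr_sumr keyr.
rewrite (eq_bigr (fun u => if u == r then c r * (d * N)%N%:Z else 0)); last first.
  by move=> u _; case: eqP => [->|_]; rewrite ?mulr0.
rewrite -big_mkcond big_pred1_eq.
move=> E.
have E2 : (k * G d h 0)%N%:Z = c r * N%:Z.
  apply: (@mulfI _ d%:Z); first by apply/negP => /eqP; lia.
  have lr : lvl r = 0%N by [].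
  by move: E; rewrite /g /= -mulr_natr natz !PoszM lr => E; rewrite [LHS]mulrA E mulrCA.
have : (N %| G d h 0 * k)%N.
  apply/dvdnP; exists `|c r|%N; rewrite mulnC.
  by have := f_equal absz E2; rewrite abszM.
have cop : coprime N (G d h 0).
  rewrite coprimeXl // (G_S d hh) addnC mulnC -coprime_modr modnMDl coprime_modr.
  exact: coprimen1.
rewrite Gauss_dvdr // => /(dvdn_leq k0); lia.
Qed.
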